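(* Let $(\Lambda,d)$ be a finitely aligned $k$-graph. The family of sets $\{D_F,\ X_\Lambda\setminus D_F : F\in S_\Lambda\}$ is a subbasis for a Hausdorff topology on $X_\Lambda$.
   Context: A $k$-graph $(\Lambda,d)$ is a countable small category $\Lambda$ (objects identified with identity morphisms) with a functor $d:\Lambda\to\mathbb N^k$ satisfying unique factorization: whenever $d(\lambda)=m+n$ there are unique $\mu,\nu$ with $d(\mu)=m$, $d(\nu)=n$, $\lambda=\mu\nu$. $\Lambda^0=d^{-1}(0)$, $r,s$ range/source. $\Lambda^{\min}(\lambda,\mu)=\{(\alpha,\beta):\lambda\alpha=\mu\beta,\ d(\lambda\alpha)=d(\lambda)\vee d(\mu)\}$; finitely aligned means all are finite. $S_\Lambda$ is the set of finite $F\subseteq\{(\lambda,\mu)\in\Lambda\times\Lambda:s(\lambda)=s(\mu)\}$ such that distinct $(\lambda,\mu),(\nu,\omega)\in F$ satisfy $\Lambda^{\min}(\lambda,\nu)=\Lambda^{\min}(\mu,\omega)=\emptyset$. For $m\in(\mathbb N\cup\{\infty\})^k$, $\Omega_{k,m}$ is the $k$-graph with objects $\{p\in\mathbb N^k:p\le m\}$, morphisms $(p,q)$ with $p\le q\le m$, $r(p,q)=p$, $s(p,q)=q$, $d(p,q)=q-p$. $X_\Lambda$ is the set of all functors $x:\Omega_{k,m}\to\Lambda$ (any $m$) with $d(x(p,q))=q-p$; $d(x)=m$, $r(x)=x(0,0)$. For $F\in S_\Lambda$, $D_F=\{x\in X_\Lambda:\text{there is }(\lambda,\mu)\in F\text{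 with }d(\mu)\le d(x),\ x(0,d(\mu))=\mu\}$. *)

(* Defs.v *)
From Stdlib Require List.
From mathcomp Require Import all_boot.
Set Implicit Arguments.
Unset Strict Implicit.
Unset Printing Implicit Defensive.

Definition vec (k : nat) := 'I_k -> nat.
Definition vzero {k} : vec k := fun _ => 0.
Definition vadd {k} (p q : vec k) : vec k := fun i => p i + q i.
Definition vsub {k} (q p : vec k) : vec k := fun i => q i - p i.
Definition vjoin {k} (p q : vec k) : vec k := fun i => maxn (p i) (q i).
Definition vle {k} (p q : vec k) : Prop := forall i, p i <= q i.

(* extended degrees: None stands for infinity *)
Definition evec (k : nat) := 'I_k -> option nat.
Definition vle_e {k} (p : vec k) (m : evec k) : Prop :=
  forall i, match m i with Some n => p i <= n | None => true end.

(* k-graphs.  Composition is a total function, only meaningful (and   *)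
(* only constrained) on composable pairs (src f = rng g).  Objects are *)
(* a separate type identified with identity morphisms via [idm].       *)
Record kgraph (k : nat) := KGraph {
  Obj : Type;
  Mor : Type;
  idm : Obj -> Mor;
  rng : Mor -> Obj;
  src : Mor -> Obj;
  comp : Mor -> Mor -> Mor;       (* comp f g = f g : first g then f *)
  deg : Mor -> vec k;
  obj_countable : exists c : Obj -> nat, injective c;
  mor_countable : exists c : Mor -> nat, injective c;
  rng_idm : forall a, rng (idm a) = a;
  src_idm : forall a, src (idm a) = a;
  comp_idl : forall f, comp (idm (rng f)) f = f;
  comp_idr : forall f, comp f (idm (src f)) = f;
  rng_comp : forall f g, src f = rng g -> rng (comp f g) = rng f;
  src_comp : forall f g, src f = rng g -> src (comp f g) = src g;
  comp_assoc : forall f g h, src f = rng g -> src g = rng h ->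
     comp f (comp g h) = comp (comp f g) h;
  deg_idm : forall a, deg (idm a) = vzero;
  deg_comp : forall f g, src f = rng g -> deg (comp f g) = vadd (deg f) (deg g);
  unique_fact : forall l (m n : vec k), deg l = vadd m n ->
     exists mu nu, [/\ deg mu = m, deg nu = n, src mu = rng nu & l = comp mu nu]
     /\ forall mu' nu', deg mu' = m -> deg nu' = n -> src mu' = rng nu' ->
          l = comp mu' nu' -> mu' = mu /\ nu' = nu
}.

Arguments idm {k} _ _.
Arguments rng {k} _ _.
Arguments src {k} _ _.
Arguments comp {k} _ _ _.
Arguments deg {k} _ _.

Definition finite_pred {T : Type} (A : T -> Prop) : Prop :=
  exists s : seq T, forall x, A x -> List.In x s.

Definition Lmin {k} (L : kgraph k) (l mu : Mor L) : Mor L * Mor L -> Prop :=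
  fun ab => let: (a, b) := ab in
    [/\ src L l = rng L a, src L mu = rng L b,
        comp L l a = comp L mu b
      & deg L (comp L l a) = vjoin (deg L l) (deg L mu)].

Arguments Lmin {k} L l mu _.

Definition finitely_aligned {k} (L : kgraph k) : Prop :=
  forall l mu : Mor L, finite_pred (Lmin L l mu).

Definition S_Lambda {k} (L : kgraph k) (F : Mor L * Mor L -> Prop) : Prop :=
  [/\ finite_pred F,
      (forall lm, F lm -> src L lm.1 = src L lm.2)
    & (forall lm nw, F lm -> F nw -> lm <> nw ->
         (forall ab, ~ Lmin L lm.1 nw.1 ab) /\ (forall ab, ~ Lmin L lm.2 nw.2 ab))].

Arguments S_Lambda {k} L F.

(* X_Lambda: degree-preserving functors Omega_{k,m} -> Lambda.         *)
(* A functor is recorded through its action on morphisms (p,q) of     *)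
(* Omega_{k,m}; [xmap p q] is [Some (x(p,q))] if p <= q <= m and None  *)
(* otherwise (so that equal functors have equal representations).     *)
(* The object map is p |-> x(p,p).                                     *)
Record kpath {k} (L : kgraph k) := KPath {
  xdeg : evec k;
  xmap : vec k -> vec k -> option (Mor L);
  xmap_out : forall p q, ~ (vle p q /\ vle_e q xdeg) -> xmap p q = None;
  xmap_in : forall p q, vle p q -> vle_e q xdeg ->
     exists l, xmap p q = Some l /\ deg L l = vsub q p;
  xmap_id : forall p l, xmap p p = Some l -> l = idm L (rng L l);
  xmap_comp : forall p q r l1 l2, xmap p q = Some l1 -> xmap q r = Some l2 ->
     src L l1 = rng L l2 /\ xmap p r = Some (comp L l1 l2)
}.

Arguments xdeg {k L} _ _ : rename.
Arguments xdeg {k L} _ : rename.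

Definition D_F {k} (L : kgraph k) (F : Mor L * Mor L -> Prop) : kpath L -> Prop :=
  fun x => exists lm, F lm /\ vle_e (deg L lm.2) (xdeg x)
                      /\ xmap x vzero (deg L lm.2) = Some lm.2.

Arguments D_F {k} L F _.

(* U is open in the topology generated by the family B: every point of U
   lies in a finite intersection of members of B contained in U
   (the empty intersection being the whole space). *)
Definition gen_open {T : Type} (B : (T -> Prop) -> Prop) (U : T -> Prop) : Prop :=
  forall x, U x -> exists s : seq (T -> Prop),
    (forall V, List.In V s -> B V) /\ (forall V, List.In V s -> V x) /\
    (forall y, (forall V, List.In V s -> V y) -> U y).

Definition hausdorff_gen {T : Type} (B : (T -> Prop) -> Prop) : Prop :=
  forall x y : T, x <> y -> exists U V,
    [/\ gen_open B U, gen_open B V, U x, V y & forall z, U z -> V z -> False].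

Definition DF_family {k} (L : kgraph k) : (kpath L -> Prop) -> Prop :=
  fun U => exists F, S_Lambda L F /\
    (U = D_F L F \/ U = (fun x => ~ D_F L F x)).

Arguments DF_family {k} L _.

(* Main.v *)
Require Import Defs.
From mathcomp Require Import all_boot.
From Stdlib Require Import Classical FunctionalExtensionality ProofIrrelevance.

Set Implicit Arguments.
Section Aux.
Variables (k : nat) (L : kgraph k).

Lemma vsub0 (n : vec k) : vsub n vzero = n.
Proof. apply: functional_extensionality => i; by rewrite /vsub subn0. Qed.

Lemma gen_open_sub (B : (kpath L -> Prop) -> Prop) U : B U -> gen_open B U.
Proof.
move=> BU x Ux; exists [:: U]; split; [|split].
- by move=> V [<-|[]].
- by move=> V [<-|[]].
- by move=> y /(_ U (or_introl erefl)).
Qed.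

Definition sepd (x y : kpath L) := exists U V,
    [/\ gen_open (DF_family L) U, gen_open (DF_family L) V, U x, V y
      & forall z, U z -> V z -> False].

Lemma sepd_sym x y : sepd x y -> sepd y x.
Proof.
move=> [U [V [hU hV Ux Vy dUV]]]; exists V, U; split => // z Vz Uz.
exact: (dUV z).
Qed.

Lemma sep (x y : kpath L) (n : vec k) : vle_e n (xdeg x) ->
  (forall mu, xmap x vzero n = Some mu ->
     ~ (vle_e n (xdeg y) /\ xmap y vzero n = Some mu)) -> sepd x y.
Proof.
move=> hn hy.
have [mu [hmu dmu]] : exists l, xmap x vzero n = Some l /\ deg L l = vsub n vzero.
  by apply: xmap_in => // i.
rewrite vsub0 in dmu.
pose F := fun lm : Mor L * Mor L => lm = (mu, mu).
have SF : S_Lambda L F.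
  split.
  - by exists [:: (mu, mu)] => lm ->; left.
  - by move=> lm ->.
  - by move=> lm nw -> -> [].
exists (D_F L F), (fun z => ~ D_F L F z); split.
- by apply: gen_open_sub; exists F; split => //; left.
- by apply: gen_open_sub; exists F; split => //; right.
- by exists (mu, mu); split => //=; rewrite dmu.
- move=> [lm [-> /= [h1 h2]]]; apply: (hy mu hmu); by rewrite -dmu.
- by move=> z.
Qed.

Lemma kpath_eq (x y : kpath L) : xdeg x = xdeg y ->
  (forall p q, xmap x p q = xmap y p q) -> x = y.
Proof.
case: x => d1 m1 a1 b1 c1 e1; case: y => d2 m2 a2 b2 c2 e2 /= Ed Em.
subst d2.
have Em' : m1 = m2.
  apply: functional_extensionality => p; apply: functional_extensionality => q.
  exact: Em.
subst m2; f_equal; apply: proof_irrelevance.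
Qed.

Lemma vle_e_trans (p q : vec k) d : vle p q -> vle_e q d -> vle_e p d.
Proof.
move=> hpq hq i; move: (hq i) (hpq i); case: (d i) => // a.
move=> h1 h2; exact: leq_trans h2 h1.
Qed.

Lemma same_init (x y : kpath L) : xdeg x = xdeg y ->
  (forall n, vle_e n (xdeg x) -> xmap x vzero n = xmap y vzero n) -> x = y.
Proof.
move=> Ed H; apply: kpath_eq => // p q.
case: (classic (vle p q /\ vle_e q (xdeg x))) => [[hpq hq]|hn]; last first.
  rewrite !xmap_out //; by rewrite -Ed.
have hp : vle_e p (xdeg x) by exact: vle_e_trans hpq hq.
have [l1 [h1 d1]] := xmap_in hpq hq.
have [l2 [h2 d2]] : exists l, xmap y p q = Some l /\ deg L l = vsub q p.
  by apply: xmap_in => //; rewrite -Ed.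
have [a [ha da]] : exists l, xmap x vzero p = Some l /\ deg L l = vsub p vzero.
  by apply: xmap_in => // i.
have hay : xmap y vzero p = Some a by rewrite -H.
have [s1 c1] := xmap_comp ha h1.
have [s2 c2] := xmap_comp hay h2.
have Eq : Defs.comp L a l1 = Defs.comp L a l2.
  by move: (H q hq); rewrite c1 c2 => -[].
have dl : deg L (Defs.comp L a l1) = vadd p (vsub q p) by rewrite deg_comp // da d1 vsub0.
have [mu [nu [_ U]]] := @unique_fact _ L _ _ _ dl.
have [_ e1] := U a l1 (ltac:(by rewrite da vsub0)) d1 s1 erefl.
have [_ e2] := U a l2 (ltac:(by rewrite da vsub0)) d2 s2 Eq.
by rewrite h1 h2 e1 e2.
Qed.

Definition ev (i : 'I_k) (c : nat) : vec k := fun j => if j == i then c else 0.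

Lemma ev_le i c d : (match d i with Some n => c <= n | None => true end) ->
  vle_e (ev i c) d.
Proof.
move=> h j; rewrite /ev; case: eqP => [->|_] //; by case: (d j).
Qed.

Lemma ev_nle i a d : d i = Some a -> ~ vle_e (ev i a.+1) d.
Proof.
move=> hd /(_ i); rewrite hd /ev eqxx; by rewrite ltnn.
Qed.

Lemma deg_sep (x y : kpath L) i a : xdeg y i = Some a ->
  (match xdeg x i with Some n => a < n | None => true end) -> sepd x y.
Proof.
move=> hy hx; apply: (@sep x y (ev i a.+1)).
  exact: ev_le.
by move=> mu _ [/(ev_nle hy)].
Qed.

End Aux.

Theorem proposition5p4 (k : nat) (L : kgraph k) :
  finitely_aligned L -> hausdorff_gen (DF_family L).
Proof.
move=> _ x y nxy.
suff: sepd x y by [].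
case: (classic (xdeg x = xdeg y)) => [Ed|Nd].
  case: (classic (forall n, vle_e n (xdeg x) -> xmap x vzero n = xmap y vzero n)) => [H|H].
    by case: nxy; apply: same_init.
  have [n hn] := not_all_ex_not _ _ H.
  have [hn1 hn2] := imply_to_and _ _ hn.
  apply: (@sep _ _ x y n hn1) => mu hmu [_ hmy]; apply: hn2; by rewrite hmu hmy.
have [i hi] : exists i, xdeg x i <> xdeg y i.
  apply: NNPP => hne; apply: Nd; apply: functional_extensionality => i.
  by apply: NNPP => h; apply: hne; exists i.
move: hi; case ex: (xdeg x i) => [a|]; case ey: (xdeg y i) => [b|] // hab.
- case: (ltngtP a b) => [ab|ba|e]; last by rewrite e in hab.
  + apply: sepd_sym; apply: (@deg_sep _ _ y x i a ex); by rewrite ey.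
  + apply: (@deg_sep _ _ x y i b ey); by rewrite ex.
- apply: sepd_sym; apply: (@deg_sep _ _ y x i a ex); by rewrite ey.
- apply: (@deg_sep _ _ x y i b ey); by rewrite ex.
Qed.
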